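(* Let $\mathcal{F}=(\mathcal{F}_1,\dots,\mathcal{F}_r)$ be a flag on $\mathbb{F}_{q^n}$ whose best friend is the subfield $\mathbb{F}_{q^m}$, and let $\beta\in\mathbb{F}_{q^n}^\ast\setminus\mathbb{F}_{q^m}^\ast$. (1) If exactly $j\geq 1$ of the subspaces $\mathcal{F}_1,\dots,\mathcal{F}_r$ have $\mathbb{F}_{q^m}$ as their best friend, then $d_f(\mathrm{Orb}_\beta(\mathcal{F}))\geq 2mj$. (2) If $d_f(\mathrm{Orb}_\beta(\mathcal{F}))=2m$, then $\mathbb{F}_{q^m}$ is the best friend of exactly one subspace of $\mathcal{F}$.
   Context: $q$ is a prime power and $\mathbb{F}_{q^n}$ is regarded as an $n$-dimensional $\mathbb{F}_q$-vector space; all subspaces are $\mathbb{F}_q$-subspaces. The subspace distance is $d_S(\mathcal{U},\mathcal{V})=\dim(\mathcal{U}+\mathcal{V})-\dim(\mathcal{U}\cap\mathcal{V})$. A flag $\mathcal{F}=(\mathcal{F}_1,\dots,\mathcal{F}_r)$ on $\mathbb{F}_{q^n}$ is a sequence of subspaces $\{0\}\subsetneq\mathcal{F}_1\subsetneq\cdots\subsetneq\mathcal{F}_r\subsetneq\mathbb{F}_{q^n}$; its type is $(\dim\mathcal{F}_1,\dots,\dim\mathcal{F}_r)$. The flag distance between flags of the same type is $d_f(\mathcal{F},\mathcal{F}')=\sum_{i=1}^r d_S(\mathcal{F}_i,\mathcal{F}'_i)$. A flag code is a nonempty set of flags of a fixed type; its minimum distance $d_f(\mathcal{C})$ is the minimum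 of $d_f$ over pairs of distinct elements (and $0$ if $|\mathcal{C}|=1$). For $\beta\in\mathbb{F}_{q^n}^\ast$ of multiplicative order $|\beta|$, $\mathcal{F}\beta=(\mathcal{F}_1\beta,\dots,\mathcal{F}_r\beta)$ and $\mathrm{Orb}_\beta(\mathcal{F})=\{\mathcal{F}\beta^j: 0\le j\le|\beta|-1\}$. A subfield $\mathbb{F}_{q^m}\subseteq\mathbb{F}_{q^n}$ is a friend of a subspace $\mathcal{U}$ if $\mathcal{U}$ is an $\mathbb{F}_{q^m}$-vector space (closed under multiplication by $\mathbb{F}_{q^m}$); the best friend of $\mathcal{U}$ is its largest friend. A subfield is a friend of a flag if it is a friend of all its subspaces; the best friend of a flag is its largest friend. *)

(* Defs.v *)
From HB Require Import structures.
From mathcomp Require Import all_boot all_order all_algebra all_field.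
From Stdlib Require Import ClassicalEpsilon.
Set Implicit Arguments. Unset Strict Implicit. Unset Printing Implicit Defensive.
Import GRing.Theory.
Local Open Scope ring_scope.

(* F plays the role of F_q (a finite field), L the role of F_{q^n}, a finite
   dimensional field extension of F; "subspace" = {vspace L} (F-subspaces),
   "subfield of F_{q^n}" = {subfield L} (subfields containing F_q, i.e. all
   subfields F_{q^m}); m = \dim E. *)
Section FlagDefs.
Variables (F : finFieldType) (L : fieldExtType F).

Definition subspace_dist (U V : {vspace L}) : nat :=
  (\dim (U + V) - \dim (U :&: V))%N.

Definition strict_sub (U V : {vspace L}) : bool := (U <= V)%VS && (U != V).
Definition is_flag (f : seq {vspace L}) : bool :=
  path strict_sub 0%VS (rcons f fullv).

Definition flag_dist (f g : seq {vspace L}) : nat :=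
  sumn [seq subspace_dist p.1 p.2 | p <- zip f g].

(* minimum distance of a flag code given as a list of flags
   (0 if there are no two distinct elements) *)
Definition min_dist (C : seq (seq {vspace L})) : nat :=
  let ds := [seq flag_dist x y | x <- C, y <- [seq y <- C | y != x]] in
  if ds is d :: ds' then foldr minn d ds' else 0%N.

Definition flag_mul (f : seq {vspace L}) (b : L) : seq {vspace L} :=
  [seq (U * <[b]>)%VS | U <- f].

(* multiplicative order of b (b <> 0): least k >= 1 with b^k = 1;
   such k exists with k <= #|F|^(dim L) - 1, so the search bound suffices *)
Definition mult_order (b : L) : nat :=
  (find (fun k => b ^+ k.+1 == 1) (iota 0 (#|F| ^ \dim (fullv : {vspace L}))%N)).+1.

Definition flag_orbit (f : seq {vspace L}) (b : L) : seq (seq {vspace L}) :=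
  [seq flag_mul f (b ^+ j) | j <- iota 0 (mult_order b)].

Definition friend (E : {subfield L}) (U : {vspace L}) : bool := (E * U <= U)%VS.
(* best friend: the largest friend (Prop), and its boolean reflection
   (via classical excluded middle) so that subspaces can be counted *)
Definition is_best_friend (E : {subfield L}) (U : {vspace L}) : Prop :=
  friend E U /\ forall E' : {subfield L}, friend E' U -> (E' <= E)%VS.
Definition best_friend (E : {subfield L}) (U : {vspace L}) : bool :=
  if excluded_middle_informative (is_best_friend E U) then true else false.

Definition flag_friend (E : {subfield L}) (f : seq {vspace L}) : bool :=
  all (friend E) f.
Definition flag_best_friend (E : {subfield L}) (f : seq {vspace L}) : Prop :=
  flag_friend E f /\ forall E' : {subfield L}, flag_friend E' f -> (E' <= E)%VS.

End FlagDefs.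

(* Main.v *)
Require Import Defs.
From HB Require Import structures.
From mathcomp Require Import all_boot all_order all_algebra all_field.
From mathcomp Require Import zify.
From Stdlib Require Import Classical ClassicalEpsilon.
Import GRing.Theory.
Local Open Scope ring_scope.

Section H.
Variables (F : finFieldType) (L : fieldExtType F).
Implicit Types (U V W : {vspace L}) (K E : {subfield L}).

Lemma mulvA U a b : (U * <[a]> * <[b]> = U * <[a * b]>)%VS.
Proof. by rewrite -prodvA prodv_line. Qed.

Lemma dim_mulv U a : a != 0 -> \dim (U * <[a]>) = \dim U.
Proof.
move=> a0; apply/eqP; rewrite eqn_leq; apply/andP; split.
  by apply: leq_trans (dim_prodv _ _) _; rewrite dim_vline a0 muln1.
have e : U = (U * <[a]> * <[a^-1]>)%VS.
  rewrite mulvA mulfV //. rewrite prodv1 //.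
rewrite {1}e.
by apply: leq_trans (dim_prodv _ _) _; rewrite dim_vline invr_eq0 a0 muln1.
Qed.

Lemma friend_mul K U a : (K * U <= U -> K * (U * <[a]>) <= U * <[a]>)%VS.
Proof. by move=> h; rewrite prodvA prodvSl. Qed.

Lemma dist_bound K W W' : (K * W <= W)%VS -> (K * W' <= W')%VS ->
  \dim W = \dim W' -> W != W' -> (2 * \dim K <= subspace_dist W W')%N.
Proof.
move=> hW hW' ed neq.
have hc : (K * (W :&: W') <= W :&: W')%VS.
  rewrite subv_cap; apply/andP; split.
    by apply: subv_trans hW; apply: prodvSr; apply: capvSl.
  by apply: subv_trans hW'; apply: prodvSr; apply: capvSr.
have dc := field_module_dimS hc; have dd := field_module_dimS hW.
have sc := dimv_sum_cap W W'.
have lt : (\dim (W :&: W') < \dim W)%N.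
  rewrite ltn_neqAle dimvS ?capvSl // andbT; apply/negP => /eqP e.
  have : (W <= W')%VS.
    have : (W :&: W' == W)%VS by rewrite eqEdim capvSl e leqnn.
    by move/eqP => <-; rewrite capvSr.
  move=> s; move/negP: neq; apply; rewrite eqEdim s ed leqnn //.
rewrite -ed in sc; move: dc dd lt sc; rewrite /subspace_dist.
move: (\dim (W :&: W')) (\dim W) (\dim (W + W')) => c d s.
move=> /dvdnP [x ->] /dvdnP [y ->] lt sc.
have xy : (x < y)%N by move: lt; rewrite ltn_mul2r => /andP [].
have : (\dim K * x.+1 <= \dim K * y)%N by rewrite leq_mul2l xy orbT.
set k := \dim K in sc lt *. lia.
Qed.

Lemma stab_in E U g : (E * U <= U)%VS -> (U * <[g]> = U)%VS ->
  (forall E', friend E' U -> (E' <= E)%VS) -> g \in E.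
Proof.
move=> hE hg hb.
have : friend <<E; g>>%AS U.
  rewrite /friend /=; apply: agenv_modl.
  by rewrite prodvDl subv_add hE /= prodvC hg subvv.
move/hb => s; exact: (subvP s _ (memv_adjoin _ _)).
Qed.

Lemma fixE E U x : x \in E -> x != 0 -> (E * U <= U)%VS -> (U * <[x]> = U)%VS.
Proof.
move=> xE x0 h; apply/eqP; rewrite eqEdim dim_mulv // leqnn andbT.
by rewrite prodvC; apply: subv_trans h; apply: prodvSl; rewrite -memvE.
Qed.

Lemma comp_dim E K : ~~ (K <= E)%VS -> (2 * \dim E <= \dim (E * K)%AS)%N.
Proof.
move=> nKE.
have sE : (E <= (E * K)%AS)%VS by rewrite /= field_subvMr.
have dv := field_dimS sE.
have lt : (\dim E < \dim (E * K)%AS)%N.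
  rewrite ltn_neqAle dimvS // andbT; apply/negP => /eqP e.
  have : (E == (E * K)%AS :> {vspace L})%VS by rewrite eqEdim sE -e leqnn.
  move/eqP => e2; move/negP: nKE; apply; rewrite e2 /= field_subvMl //.
move: dv lt => /dvdnP [x ->].
rewrite -{1}(mul1n (\dim E)) ltn_mul2r => /andP [_ lt].
by rewrite leq_mul2r lt orbT.
Qed.

Lemma comp_friend E K U : friend E U -> friend K U -> friend (E * K)%AS U.
Proof.
rewrite /friend /= => hE hK; rewrite -prodvA.
by apply: subv_trans hE; apply: prodvSr.
Qed.

Lemma unmul U a b : a != 0 -> (U * <[a]> = U * <[b]>)%VS -> (U * <[b / a]> = U)%VS.
Proof.
move=> a0 e; rewrite -mulvA -e mulvA mulfV // prodv1 //.
Qed.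

Lemma flag_dist_mul f a b : flag_dist (flag_mul f a) (flag_mul f b) =
  sumn [seq subspace_dist (U * <[a]>)%VS (U * <[b]>)%VS | U <- f].
Proof. by elim: f => //= U f IH; rewrite /flag_dist /= -IH. Qed.

Lemma sumn_count (P : pred {vspace L}) (g : {vspace L} -> nat) c s :
  (forall U, U \in s -> P U -> c <= g U)%N -> (c * count P s <= sumn (map g s))%N.
Proof.
elim: s => [|U s IH] h /=; first by rewrite muln0.
rewrite mulnDr; apply: leq_add.
  case: (P U) /idP => pU; last by rewrite muln0.
  by rewrite muln1; apply: h; rewrite ?mem_head.
by apply: IH => V Vs; apply: h; rewrite in_cons Vs orbT.
Qed.

Lemma sumn_ge (g : {vspace L} -> nat) s U : U \in s -> (g U <= sumn (map g s))%N.
Proof.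
elim: s => //= V s IH; rewrite in_cons => /orP [/eqP -> | /IH h].
  exact: leq_addr.
by apply: leq_trans h (leq_addl _ _).
Qed.

Lemma foldr_minn_ge B d ds : (forall z, z \in d :: ds -> B <= z)%N -> (B <= foldr minn d ds)%N.
Proof.
elim: ds => [|e ds IH] h /=; first by apply: h; rewrite mem_head.
rewrite leq_min; apply/andP; split; first by apply: h; rewrite in_cons mem_head orbT.
apply: IH => z; rewrite in_cons => /orP [/eqP ->|zs]; apply: h.
  by rewrite mem_head.
by rewrite in_cons in_cons zs !orbT.
Qed.

Lemma foldr_minn_mem d ds : foldr minn d ds \in d :: ds.
Proof.
elim: ds => [|e ds IH] /=; first by rewrite mem_head.
rewrite /minn; case: ltnP => _; first by rewrite in_cons mem_head orbT.
by move: IH; rewrite !in_cons => /orP [->|->]; rewrite ?orbT.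
Qed.

Lemma min_dist_ge (C : seq (seq {vspace L})) B :
  (exists x y, [/\ x \in C, y \in C & y != x]) ->
  (forall x y, x \in C -> y \in C -> y != x -> B <= flag_dist x y)%N ->
  (B <= min_dist C)%N.
Proof.
move=> [x0 [y0 [x0C y0C ne0]]] h; rewrite /min_dist.
set ds := [seq _ | x <- C, y <- _].
have hz : forall z, z \in ds -> (B <= z)%N.
  move=> z /allpairsPdep [x [y [xC]]]; rewrite mem_filter => /andP [yx yC] ->.
  exact: h.
have : flag_dist x0 y0 \in ds.
  by apply/allpairsPdep; exists x0, y0; rewrite mem_filter ne0 y0C.
case: ds hz => // d ds hz _; apply: foldr_minn_ge => z zi; exact: hz.
Qed.

Lemma min_dist_mem (C : seq (seq {vspace L})) : min_dist C != 0%N ->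
  exists x y, [/\ x \in C, y \in C, y != x & min_dist C = flag_dist x y].
Proof.
rewrite /min_dist; set ds := [seq _ | x <- C, y <- _].
have : foldr minn 0%N ds \in 0%N :: ds by exact: foldr_minn_mem.
have hm : forall z, z \in ds -> exists x y, [/\ x \in C, y \in C, y != x & z = flag_dist x y].
  move=> z /allpairsPdep [x [y [xC]]]; rewrite mem_filter => /andP [yx yC] ->.
  by exists x, y.
case: ds hm => // d ds hm _ _; apply: hm; exact: foldr_minn_mem.
Qed.

Lemma orbitP (f : seq {vspace L}) (b : L) x : x \in flag_orbit f b -> exists a, x = flag_mul f (b ^+ a).
Proof. by case/mapP => a _ ->; exists a. Qed.

Lemma mult_order_ge2 (b : L) : b != 1 -> (1 < mult_order b)%N.
Proof.
move=> b1; rewrite /mult_order ltnS.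
have : (0 < #|F| ^ \dim (fullv : {vspace L}))%N.
  by rewrite expn_gt0; apply/orP; left; apply/card_gt0P; exists 0.
case: (#|F| ^ _)%N => // N _ /=; rewrite expr1 (negbTE b1) //.
Qed.

Lemma best_friendP E U : best_friend E U -> is_best_friend E U.
Proof. by rewrite /best_friend; case: excluded_middle_informative. Qed.

Lemma not_best_friend E U : ~~ best_friend E U -> ~ is_best_friend E U.
Proof. by rewrite /best_friend; case: excluded_middle_informative. Qed.

Lemma pair_facts (f : seq {vspace L}) E (beta : L) x y :
  flag_best_friend E f -> beta != 0 ->
  x \in flag_orbit f beta -> y \in flag_orbit f beta -> y != x ->
  exists g : {vspace L} -> nat, [/\ flag_dist x y = sumn (map g f),
    (forall U, U \in f -> best_friend E U -> (2 * \dim E <= g U)%N) &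
    exists2 U, U \in f & forall K, friend K U -> (2 * \dim K <= g U)%N].
Proof.
move=> [fE fB] b0 /orbitP [a ->] /orbitP [c ->] ne.
set p := beta ^+ a; set q := beta ^+ c.
have p0 : p != 0 by rewrite expf_neq0.
have q0 : q != 0 by rewrite expf_neq0.
have fU : forall U, U \in f -> friend E U by apply/allP.
exists (fun U => subspace_dist (U * <[p]>)%VS (U * <[q]>)%VS).
have gb : forall U K, friend K U -> (U * <[p]> != U * <[q]>)%VS ->
    (2 * \dim K <= subspace_dist (U * <[p]>)%VS (U * <[q]>)%VS)%N.
  move=> U K hK neU; apply: dist_bound => //; try exact: friend_mul.
  by rewrite !dim_mulv.
split; first exact: flag_dist_mul.
- move=> U Uf /best_friendP [hE hB]; apply: gb => //.
  apply/eqP => e; have e2 := unmul _ _ _ p0 e.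
  have qpE : q / p \in E := stab_in _ _ _ hE e2 hB.
  move/negP: ne; apply; apply/eqP; apply/eq_in_map => V Vf /=; rewrite -/p -/q.
  have qp0 : q / p != 0 by rewrite mulf_neq0 ?invr_eq0.
  have -> : q = (q / p) * p by rewrite divfK.
  by rewrite -mulvA (fixE _ _ _ qpE qp0 (fU V Vf)).
- have : ~~ all (fun U => U * <[p]> == U * <[q]>)%VS f.
    apply/negP => /allP h; move/negP: ne; apply; apply/eqP.
    by apply/eq_in_map => V /h /eqP.
  case/allPn => U Uf neU; exists U => // K hK; exact: gb.
Qed.

End H.

Theorem mainTheorem1 (F : finFieldType) (L : fieldExtType F)
    (f : seq {vspace L}) (E : {subfield L}) (beta : L) :
  is_flag f -> flag_best_friend E f ->
  beta != 0 -> beta \notin E ->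
  (forall j : nat, (0 < j)%N -> count (best_friend E) f = j ->
     (2 * \dim E * j <= min_dist (flag_orbit f beta))%N) /\
  (min_dist (flag_orbit f beta) = (2 * \dim E)%N -> count (best_friend E) f = 1%N).
Proof.
move=> _ hfb b0 bE; have [fE fB] := hfb.
have m0 := adim_gt0 E.
have fU : forall U, U \in f -> friend E U by apply/allP.
split.
- move=> j j0 cj; apply: min_dist_ge.
    have b1 : beta != 1 by apply: contraNneq bE => ->; apply: mem1v.
    have o2 := @mult_order_ge2 _ _ beta b1.
    exists (flag_mul f (beta ^+ 0)), (flag_mul f (beta ^+ 1)); split.
    + by rewrite /flag_orbit; apply: (map_f (fun j => flag_mul f (beta ^+ j))); rewrite mem_iota; apply: leq_trans o2.
    + by rewrite /flag_orbit; apply: (map_f (fun j => flag_mul f (beta ^+ j))); rewrite mem_iota.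
    + have : has (best_friend E) f by rewrite has_count cj.
      case/hasP => U Uf /best_friendP [hE hB].
      apply/negP => /eqP /eq_in_map h; have := h U Uf.
      rewrite expr0 expr1 prodv1 => e.
      by move/negP: bE; apply; apply: (@stab_in _ _ _ _ _ hE e hB).
  move=> x y xo yo ne.
  have [g [-> hb _]] := @pair_facts _ _ _ _ _ _ _ hfb b0 xo yo ne.
  rewrite -cj; exact: sumn_count.
- move=> hm.
  have : min_dist (flag_orbit f beta) != 0%N by rewrite hm muln_eq0 negb_or /= -lt0n m0.
  case/min_dist_mem => x [y [xo yo ne ed]].
  have [g [ed2 hb [U0 U0f hU0]]] := @pair_facts _ _ _ _ _ _ _ hfb b0 xo yo ne.
  rewrite ed ed2 in hm.
  have hc := @sumn_count _ _ _ _ _ _ hb.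
  case cE: (count (best_friend E) f) => [|[|k]] //.
    have nb : ~~ best_friend E U0.
      apply/negP => b; have : has (best_friend E) f by apply/hasP; exists U0.
      by rewrite has_count cE.
    have nbf := @not_best_friend _ _ _ _ nb.
    have [E' [hE' nE']] : exists E', friend E' U0 /\ ~ (E' <= E)%VS.
      apply: NNPP => hn; apply: nbf; split; first exact: fU.
      move=> E' h; apply: NNPP => hn2; apply: hn; by exists E'.
    have hk := hU0 _ (@comp_friend _ _ _ _ _ (fU _ U0f) hE').
    have nE2 : ~~ (E' <= E)%VS by apply/negP.
    have hd := @comp_dim _ _ _ _ nE2.
    have hs := @sumn_ge _ _ g _ _ U0f.
    rewrite hm in hs.
    set m := \dim E in hs hd m0; set n := \dim _ in hk hd.
    lia.
  rewrite cE hm in hc.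
  set m := \dim E in hc m0; nia.
Qed.
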